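(* Let $\omega\ge 2$ and let $\Gamma$ be an $\omega$-clique regular finite simple graph with maximum degree $\Delta(\Gamma)$. Then every adjacency eigenvalue $\lambda$ of $C_\omega(\Gamma)$ satisfies \[-\omega\le\lambda\le\omega\left(\frac{\Delta(\Gamma)}{\omega-1}-1\right).\]
   Context: A graph is $\omega$-clique regular if it has a nonempty edge set and every edge lies in exactly one clique of order $\omega$. The $\omega$-clique graph $C_\omega(\Gamma)$ has as vertices the cliques of order $\omega$ of $\Gamma$, two distinct ones adjacent iff they have nonempty intersection. *)

(* Defs.v *)
From HB Require Import structures.
From mathcomp Require Import all_boot all_order all_algebra.
Set Implicit Arguments. Unset Strict Implicit. Unset Printing Implicit Defensive.
Import Order.TTheory GRing.Theory Num.Theory.

Definition simple_graph (T : finType) (e : rel T) : Prop :=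
  symmetric e /\ irreflexive e.

Definition is_clique_of_order (T : finType) (e : rel T) (w : nat) (K : {set T}) : bool :=
  (#|K| == w) && [forall x in K, forall y in K, (x != y) ==> e x y].

Definition cliques_of_order (T : finType) (e : rel T) (w : nat) : {set {set T}} :=
  [set K : {set T} | is_clique_of_order e w K].

Definition clique_regular (T : finType) (e : rel T) (w : nat) : Prop :=
  (exists x y, e x y) /\
  forall x y, e x y ->
    #|[set K in cliques_of_order e w | (x \in K) && (y \in K)]| = 1%N.

Definition max_degree (T : finType) (e : rel T) : nat :=
  \max_(x : T) #|[set y | e x y]|.

(* Adjacency matrix (over a ring R) of the w-clique graph C_w(Gamma):
   vertices are the cliques of order w (enumerated by 'I_#|cliques|),
   two distinct ones adjacent iff they intersect. *)
Definition clique_graph_adj (R : nzRingType) (T : finType) (e : rel T) (w : nat)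
  : 'M[R]_#|cliques_of_order e w| :=
  \matrix_(i, j)
    ((enum_val i != enum_val j) &&
     (enum_val i :&: enum_val j != set0) :> nat)%:R%R.

(* Main.v *)
Require Import Defs.
From HB Require Import structures.
From mathcomp Require Import all_boot all_order all_algebra.
Import Order.TTheory GRing.Theory Num.Theory.
Set Implicit Arguments. Unset Strict Implicit.
Local Open Scope ring_scope.

Section Pf.
Variables (T : finType) (e : rel T) (w : nat).
Hypothesis hreg : clique_regular e w.
Local Notation C := (cliques_of_order e w).
Local Notation n := #|C|.
Definition Sc (i : 'I_n) : {set T} := enum_val i.

Lemma Sc_clique i : is_clique_of_order e w (Sc i).
Proof. by have := enum_valP i; rewrite inE. Qed.

Lemma Sc_card i : #|Sc i| = w.
Proof. by case/andP: (Sc_clique i) => /eqP. Qed.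

Lemma Sc_edge i x y : x \in Sc i -> y \in Sc i -> x != y -> e x y.
Proof.
case/andP: (Sc_clique i) => _ /forall_inP H xi yi nxy.
by have /forall_inP/(_ y yi) := H x xi; rewrite nxy.
Qed.

Lemma Sc_uniq i j x y : x \in Sc i -> y \in Sc i -> x \in Sc j -> y \in Sc j ->
  x != y -> i = j.
Proof.
move=> xi yi xj yj nxy.
have exy := Sc_edge xi yi nxy.
have /eqP/cards1P [K0 HK] := hreg.2 x y exy.
have Hi : Sc i \in [set K in C | (x \in K) && (y \in K)].
  by rewrite inE xi yi enum_valP.
have Hj : Sc j \in [set K in C | (x \in K) && (y \in K)].
  by rewrite inE xj yj enum_valP.
rewrite HK !inE in Hi Hj.
apply: enum_val_inj; rewrite -/(Sc i) -/(Sc j).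
by rewrite (eqP Hi) (eqP Hj).
Qed.

Lemma capSc i j : #|Sc i :&: Sc j| = if i == j then w else ((Sc i :&: Sc j) != set0 : nat).
Proof.
case: eqP => [->|nij]; first by rewrite setIid Sc_card.
have le1 : (#|Sc i :&: Sc j| <= 1)%N.
  apply/card_le1_eqP => x y; rewrite !inE => /andP[xi xj] /andP[yi yj].
  case: (eqVneq x y) => [->//|nxy]; exfalso; apply: nij; exact: (Sc_uniq xi yi xj yj nxy).
case: (boolP (Sc i :&: Sc j == set0)) => [/eqP->|ne]; first by rewrite cards0.
rewrite -card_gt0 in ne.
by apply/eqP; rewrite eqn_leq le1 ne.
Qed.

End Pf.
Local Close Scope ring_scope.

Lemma sum_nat_pred (I : finType) (P Q : pred I) :
  \sum_(i | P i) (Q i : nat) = #|[pred i | P i && Q i]|.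
Proof.
rewrite -sum1_card big_mkcondr /=; apply: eq_bigr => i _; by case: (Q i).
Qed.

Section Pf2.
Variables (T : finType) (e : rel T) (w : nat).
Hypothesis hreg : clique_regular e w.
Hypothesis hw : (2 <= w)%N.
Local Notation C := (cliques_of_order e w).
Local Notation n := #|C|.
Local Notation Sc := (@Sc T e w).

Lemma count_le x : (#|[pred i | x \in Sc i]| * (w-1) <= #|[set y | e x y]|)%N.
Proof.
rewrite -sum_nat_const.
have -> : \sum_(i in [pred i | x \in Sc i]) (w - 1) =
          \sum_(i | x \in Sc i) \sum_y (y \in Sc i :\ x : nat).
  apply: eq_bigr => i xi.
  rewrite (sum_nat_pred predT) /=.
  have -> : #|[pred y | true && (y \in Sc i :\ x)]| = #|Sc i :\ x|.
    by apply: eq_card => y.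
  have H := cardsD1 x (Sc i); rewrite inE in xi; rewrite xi (Sc_card i) in H; by rewrite [in w - 1]H add1n subn1.
rewrite exchange_big /= -[X in (_ <= X)%N]sum1_card.
rewrite [X in (_ <= X)%N]big_mkcond /=.
apply: leq_sum => y _.
rewrite sum_nat_pred inE.
case: (boolP (e x y)) => exy.
  apply/card_le1_eqP => i j; rewrite !inE => /andP[xi /andP[nyx yi]] /andP[xj /andP[_ yj]].
  by symmetry; apply: (Sc_uniq hreg xi yi xj yj); rewrite eq_sym.
rewrite leqn0; apply/eqP/eq_card0 => i; rewrite !inE.
apply/negP => /andP[xi /andP[nyx yi]].
by move: exy; rewrite (Sc_edge xi yi) // eq_sym.
Qed.

End Pf2.
Local Open Scope ring_scope.

Section Pf3.
Variables (R : rcfType) (T : finType) (e : rel T) (w : nat).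
Hypothesis hreg : clique_regular e w.
Local Notation C := (cliques_of_order e w).
Local Notation n := #|C|.
Local Notation Sc := (@Sc T e w).
Local Notation A := (clique_graph_adj R e w).

Lemma capR i j : (#|Sc i :&: Sc j|%:R : R) = (i == j)%:R * w%:R + A i j.
Proof.
rewrite mxE capSc //; case: eqP => [->|nij] /=.
  by rewrite eqxx /= mul1r addr0.
rewrite mul0r add0r (inj_eq enum_val_inj).
by move/eqP: nij => ->.
Qed.

Variables (lam : R) (v : 'rV[R]_n).
Hypothesis hv : v *m A = lam *: v.
Let vv i := v 0 i.
Let u x := \sum_(i | x \in Sc i) vv i.

Lemma I1 j : \sum_(y in Sc j) u y = (lam + w%:R) * vv j.
Proof.
rewrite /u (exchange_big_dep predT) //=.
have inner : forall i, \sum_(y | (y \in Sc j) && (y \in Sc i)) vv i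
    = #|Sc i :&: Sc j|%:R * vv i.
  move=> i; rewrite (eq_bigl (fun y => y \in Sc i :&: Sc j)).
    by rewrite sumr_const mulr_natl.
  by move=> y; rewrite inE andbC.
rewrite (eq_bigr _ (fun i _ => inner i)).
under eq_bigr => i _ do rewrite capR mulrDl.
rewrite big_split /= (bigD1 j) //= eqxx mul1r big1 => [|i /negbTE -> ]; last by rewrite !mul0r.
rewrite addr0.
have := congr1 (fun M : 'rV_n => M 0 j) hv; rewrite !mxE /= => Hj.
rewrite (eq_bigr (fun i => v 0 i * A i j)) => [|i _]; last by rewrite mulrC.
by rewrite Hj /vv mulrDl addrC mulrC.
Qed.

Lemma sq_id : \sum_x u x * u x = (lam + w%:R) * \sum_i vv i * vv i.
Proof.
under eq_bigr => x _ do rewrite {2}/u mulr_sumr.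
rewrite (exchange_big_dep predT) //= mulr_sumr.
apply: eq_bigr => i _.
by rewrite -mulr_suml I1 mulrA.
Qed.

End Pf3.

Section Pf4.
Variables (R : rcfType) (T : finType) (e : rel T) (w : nat).
Hypothesis hreg : clique_regular e w.
Hypothesis hw : (2 <= w)%N.
Local Notation C := (cliques_of_order e w).
Local Notation n := #|C|.
Local Notation Sc := (@Sc T e w).
Local Notation A := (clique_graph_adj R e w).
Variables (lam : R) (v : 'rV[R]_n).
Hypothesis hv : v *m A = lam *: v.
Hypothesis hv0 : v != 0.

Lemma ex_nz : exists i, v 0 i != 0.
Proof.
apply/existsP; apply: contraR hv0 => /existsPn H.
apply/eqP/rowP => i; rewrite mxE; exact/eqP/negPn/H.
Qed.

Lemma lower : 0 <= lam + w%:R.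
Proof.
have [i0 Hi0] := ex_nz.
have spos : 0 < \sum_i v 0 i * v 0 i.
  rewrite lt_def sumr_ge0 ?andbT => [|i _]; last by rewrite -expr2 sqr_ge0.
  apply/negP => /eqP/psumr_eq0P H.
  have := H (fun i _ => sqr_ge0 (v 0 i)) i0 isT.
  by move/eqP; rewrite mulf_eq0 orbb (negbTE Hi0).
rewrite -(pmulr_lge0 _ spos) -(sq_id hreg hv).
by apply: sumr_ge0 => x _; rewrite -expr2 sqr_ge0.
Qed.

End Pf4.

Section Pf5.
Variables (R : rcfType) (T : finType) (e : rel T) (w : nat).
Hypothesis hreg : clique_regular e w.
Hypothesis hw : (2 <= w)%N.
Local Notation C := (cliques_of_order e w).
Local Notation n := #|C|.
Local Notation Sc := (@Sc T e w).
Local Notation A := (clique_graph_adj R e w).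
Variables (lam : R) (v : 'rV[R]_n).
Hypothesis hv : v *m A = lam *: v.
Hypothesis hv0 : v != 0.

Lemma upper_aux : exists x, lam + w%:R <= #|[pred i | x \in Sc i]|%:R * w%:R.
Proof.
have [x0 [y0 _]] := hreg.1.
pose u := fun x => \sum_(i | x \in Sc i) v 0 i.
case: (@arg_maxP _ _ T x0 predT (fun x => `|u x|) isT) => xm _ Hmax.
exists xm.
set M := `|u xm|.
have mu0 := lower hreg hv hv0.
have key : (lam + w%:R) * M <= #|[pred i | xm \in Sc i]|%:R * w%:R * M.
  rewrite /M -{1}(ger0_norm mu0) -normrM /u mulr_sumr.
  under eq_bigr => i _ do rewrite -(I1 hreg hv).
  apply: le_trans (ler_norm_sum _ _ _) _.
  apply: (@le_trans _ _ (\sum_(i | xm \in Sc i) (M *+ w))).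
    apply: ler_sum => i _; apply: le_trans (ler_norm_sum _ _ _) _.
    rewrite -[X in M *+ X](Sc_card i) -sumr_const; apply: ler_sum => y _; exact: Hmax.
  rewrite sumr_const -mulrnA -[M *+ _]mulr_natl natrM [(w%:R * _)]mulrC; exact: lexx.

have [M0|Mpos] := eqVneq M 0.
  have u0 : forall x, u x = 0.
    move=> x; apply/eqP; rewrite -normr_le0 -M0; exact: Hmax.
  have [i0 Hi0] := ex_nz hv0.
  have := I1 hreg hv i0.
  rewrite (eq_bigr (fun _ => 0)) => [|y _]; last exact: u0.
  rewrite big1 // => /esym/eqP; rewrite mulf_eq0 (negbTE Hi0) orbF => /eqP ->.
  by rewrite mulr_ge0 ?ler0n.
have Mp : 0 < M by rewrite lt_def Mpos normr_ge0.
by rewrite -(ler_pM2r Mp).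
Qed.

End Pf5.
Unset Implicit Arguments. Set Strict Implicit.

Theorem corollary2 (R : rcfType) (T : finType) (e : rel T) (w : nat)
  (hw : (2 <= w)%N) (hsimple : simple_graph e) (hreg : clique_regular e w)
  (lambda : R) (hlam : eigenvalue (clique_graph_adj R e w) lambda) :
  - (w%:R) <= lambda /\
  lambda <= w%:R * ((max_degree e)%:R / (w%:R - 1) - 1).
Proof.
have [v hv hv0] := eigenvalueP hlam.
split.
  by have := lower hreg hv hv0; move=> H; rewrite -subr_ge0 opprK.
have [x Hx] := upper_aux hreg hv hv0.
have hc := count_le hreg x.
have hd : (#|[set y | e x y]| <= max_degree e)%N.
  rewrite /max_degree; exact: (@leq_bigmax T (fun x => #|[set y | e x y]|) x).
have w1 : 0 < w%:R - 1 :> R by rewrite subr_gt0 ltr1n.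
have hc' : #|[pred i | x \in @Sc T e w i]|%:R <= (max_degree e)%:R / (w%:R - 1) :> R.
  rewrite ler_pdivlMr // -(natrB _ (ltnW hw)) -natrM ler_nat.
  exact: leq_trans hc hd.
rewrite mulrBr mulr1 lerBrDr; apply: le_trans Hx _.
by rewrite mulrC; apply: ler_wpM2l; rewrite ?ler0n.
Qed.
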